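(* For integers $n\geq 3$, $m\geq 1$ and $p\geq 2$, $$\chi_\rho(FSSD_m(C_n\star P_p)) \leq \begin{cases} 6, & n=3,\\ 7, & n\geq 4,\ n\notin\{5,7,11\},\\ 8, & n\in\{5,7,11\}.\end{cases}$$
   Context: All graphs are finite and simple. For a positive integer $i$, an $i$-packing in a graph is a set of vertices any two distinct members of which are at distance greater than $i$. The packing chromatic number $\chi_\rho(H)$ is the smallest $k$ such that $V(H)$ can be partitioned into sets $V_1,\dots,V_k$ with each $V_i$ an $i$-packing. For a positive integer $m$, $FSSD_m(G)$ is obtained from $G$ by replacing each edge $xy$ by a copy of $K_{2,m}$: the edge $xy$ is deleted and $m$ new vertices are added, each adjacent to exactly $x$ and $y$. The neighborhood corona $G\star H$ of graphs $G$ (with vertices $w_1,\dots,w_{n}$) and $H$ consists of one copy of $G$ and $n$ copies $H_1,\dots,H_n$ of $H$ (each retaining the edges of $H$), where every vertex of $H_i$ is additionally joined to every neighbor of $w_i$ in $G$. $C_n$ is the cycle and $P_p$ the path on $p$ vertices. *)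

(* Defs.v *)
From mathcomp Require Import all_boot.
Set Implicit Arguments. Unset Strict Implicit. Unset Printing Implicit Defensive.

(* A finite graph: a finite vertex type with an adjacency relation.
   All constructions below produce symmetric irreflexive relations. *)
Record graph := Graph { gV : finType; gE : rel gV }.

Section Dist.
Variable G : graph.

Fixpoint ball (d : nat) (x : gV G) : {set gV G} :=
  match d with
  | 0 => [set x]
  | d'.+1 => ball d' x :|: [set z | [exists w in ball d' x, gE w z]]
  end.

Definition dist_gt (i : nat) (x y : gV G) : bool := y \notin ball i x.

Definition packing (i : nat) (S : {set gV G}) : bool :=
  [forall x in S, forall y in S, (x != y) ==> dist_gt i x y].

(* V(G) partitions into V_1,...,V_k with V_i an i-packing
   (classes indexed by j : 'I_k represent V_(j+1); empty classes allowed) *)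
Definition packing_colorable (k : nat) : bool :=
  [exists f : {ffun gV G -> 'I_k},
     [forall j : 'I_k, packing j.+1 [set x | f x == j]]].

Lemma packing_colorable_card : packing_colorable #|gV G|.
Proof.
apply/existsP; exists [ffun x => enum_rank x].
apply/forallP => j; apply/forallP => x; apply/implyP; rewrite inE ffunE => /eqP Hx.
apply/forallP => y; apply/implyP; rewrite inE ffunE => /eqP Hy.
apply/implyP => Hxy; exfalso; move/negP: Hxy; apply.
by apply/eqP; apply: enum_rank_inj; rewrite Hx Hy.
Qed.

Lemma packing_colorable_ex : exists k, packing_colorable k.
Proof. by exists #|gV G|; exact: packing_colorable_card. Qed.

Definition chi_rho : nat := ex_minn packing_colorable_ex.

End Dist.

Definition cycle_graph (n : nat) : graph :=
  @Graph 'I_n (fun i j => (j == (i.+1 %% n) :> nat) || (i == (j.+1 %% n) :> nat)).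

Definition path_graph (p : nat) : graph :=
  @Graph 'I_p (fun i j => (i.+1 == j :> nat) || (j.+1 == i :> nat)).

(* neighborhood corona G * H: a copy of G plus copies H_w (w in V(G)) of H,
   each vertex of H_w joined to every neighbour of w in G *)
Definition ncorona_adj (G H : graph) (u v : gV G + (gV G * gV H)) : bool :=
  match u, v with
  | inl a, inl b => gE a b
  | inr (w, x), inr (w', x') => (w == w') && gE x x'
  | inl a, inr (w, _) => gE w a
  | inr (w, _), inl a => gE w a
  end.

Definition ncorona (G H : graph) : graph :=
  @Graph (gV G + (gV G * gV H))%type (@ncorona_adj G H).

(* FSSD_m(G): each edge xy replaced by K_{2,m}. Edges of G are represented
   by ordered pairs (x,y) with gE x y and enum_rank x < enum_rank y (one per
   unordered edge); the new vertices are (x,y,k) with k < m. *)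
Definition fssd_new (G : graph) (m : nat) :=
  {s : (gV G * gV G * 'I_m)%type |
     gE s.1.1 s.1.2 && (enum_rank s.1.1 < enum_rank s.1.2)}.

Definition fssd_adj (G : graph) (m : nat) (u v : gV G + fssd_new G m) : bool :=
  match u, v with
  | inl a, inr s => (a == (val s).1.1) || (a == (val s).1.2)
  | inr s, inl a => (a == (val s).1.1) || (a == (val s).1.2)
  | _, _ => false
  end.

Definition FSSD (m : nat) (G : graph) : graph :=
  @Graph (gV G + fssd_new G m)%type (@fssd_adj G m).

Definition theorem2_bound (n : nat) : nat :=
  if n == 3 then 6 else if n \in [:: 5; 7; 11] then 8 else 7.

(* Main.v *)
Require Import Defs.
From mathcomp Require Import all_boot zify.
Set Implicit Arguments. Unset Strict Implicit. Unset Printing Implicit Defensive.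

Lemma ball_mono (G : graph) (x : gV G) d d' : d <= d' -> ball d x \subset ball d' x.
Proof.
move=> /subnK <-; elim: (d' - d) => [|k IH] //=.
apply: subset_trans IH _; exact: subsetUl.
Qed.

Lemma ballS_adj (G : graph) (x w z : gV G) d : w \in ball d x -> gE w z -> z \in ball d.+1 x.
Proof. by move=> Hw Hwz /=; rewrite !inE; apply/orP; right; apply/existsP; exists w; rewrite Hw. Qed.

Lemma lemA (G : graph) m (Hsym : symmetric (@gE G)) (a : gV G) k (z : gV (FSSD m G)) :
  z \in ball k (inl a : gV (FSSD m G)) ->
  match z with
  | inl b => b \in ball k./2 a
  | inr s => ((val s).1.1 \in ball k.+1./2 a) && ((val s).1.2 \in ball k.+1./2 a)
  end.
Proof.
elim: k z => [|k IH] z.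
  by rewrite /= inE => /eqP ->; rewrite inE.
rewrite /= inE => /orP [/IH|].
  case: z => [b|s] H.
    by apply: (subsetP (ball_mono _ _)) H; lia.
  by case/andP: H => H1 H2; rewrite !(subsetP (ball_mono _ (_ : k.+1./2 <= k.+2./2)) _) //; lia.
rewrite inE => /existsP [w /andP [Hw Hwz]].
move: (IH w Hw) Hwz; clear Hw; case: w => [b|s]; case: z => [b'|s'] //=.
- move=> Hb Hadj.
  have Hs := valP s'.
  case/andP: Hs => Hs _.
  case/orP: Hadj => /eqP Eb; subst b.
    have Hm := subsetP (ball_mono a (leqnSn (k./2))).
    by rewrite Hm //=; apply: ballS_adj Hb Hs.
  have Hm := subsetP (ball_mono a (leqnSn (k./2))).
  rewrite andbC Hm //=.
  by apply: ballS_adj Hb _; rewrite Hsym.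
- by move=> /andP [H1 H2] Hadj; case/orP: Hadj => /eqP ->.
Qed.


Section B.
Variables n p : nat.
Local Notation G0 := (ncorona (cycle_graph n) (path_graph p)).

Lemma G0_sym : symmetric (@gE G0).
Proof.
move=> [a|[w x]] [b|[w' x']] //=; rewrite /ncorona_adj /=; first by rewrite orbC.
by rewrite eq_sym orbC.
Qed.

Definition piv (v : gV G0) : nat := match v with inl i => val i | inr (i, _) => val i end.

Lemma cyc_adj (i j : 'I_n) : gE (g:=cycle_graph n) i j ->
  (j = i + 1 %[mod n]) \/ (j + 1 = i %[mod n]).
Proof.
rewrite /= => /orP [/eqP E|/eqP E].
  by left; rewrite E modn_mod addn1.
by right; rewrite E modn_mod addn1.
Qed.

Lemma adj_pi (w z : gV G0) : gE w z ->
  [\/ piv z = piv w + 1 %[mod n], piv z + 1 = piv w %[mod n] | piv z = piv w].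
Proof.
case: w => [a|[w x]]; case: z => [b|[w' x']] //=; rewrite /ncorona_adj /=.
- by case/cyc_adj => H; [apply: Or31|apply: Or32].
- by case/cyc_adj => H; [apply: Or32|apply: Or31].
- by case/cyc_adj => H; [apply: Or31|apply: Or32].
- by case/andP => /eqP -> _; apply: Or33.
Qed.

Lemma cong_add x y k : x = y %[mod n] -> x + k = y + k %[mod n].
Proof. by move=> H; rewrite -modnDml H modnDml. Qed.

Lemma cong_cancel x y k : x + k = y + k %[mod n] -> x = y %[mod n].
Proof. by move/eqP; rewrite eqn_modDr => /eqP. Qed.

Lemma lemB r (a z : gV G0) : z \in ball r a ->
  exists2 d, d <= r & (piv z = piv a + d %[mod n]) \/ (piv z + d = piv a %[mod n]).
Proof.
elim: r z => [|r IH] z.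
  by rewrite /= inE => /eqP ->; exists 0 => //; left; rewrite addn0.
rewrite /= inE => /orP [/IH [d Hd H]|].
  by exists d => //; lia.
rewrite inE => /existsP [w /andP [/IH [d Hd H] Hwz]].
case: (adj_pi Hwz) => Ha; case: H => H.
- exists d.+1; first lia. left; rewrite Ha (cong_add 1 H).
  by have -> : piv a + d + 1 = piv a + d.+1 by lia.
- case: d Hd H => [|d] Hd H.
    by exists 1 => //; left; rewrite addn0 in H; rewrite Ha (cong_add 1 H).
  exists d; first lia. right; rewrite (cong_add d Ha) -H.
  by have -> : piv w + 1 + d = piv w + d.+1 by lia.
- case: d Hd H => [|d] Hd H.
    by exists 1 => //; right; rewrite addn0 in H; rewrite Ha H.
  exists d; first lia. left; apply: (@cong_cancel _ _ 1).
  rewrite Ha H.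
  by have -> : piv a + d + 1 = piv a + d.+1 by lia.
- exists d.+1; first lia. right.
  have -> : piv z + d.+1 = piv z + 1 + d by lia.
  by rewrite (cong_add d Ha) H.
- by exists d => //; [lia|left; rewrite Ha H].
- by exists d => //; [lia|right; rewrite Ha H].
Qed.
End B.


Definition P4 : seq nat := [:: 4; 5; 6; 7].
Definition W6 : seq nat := [:: 4; 5; 6; 4; 5; 7].
Definition W9 : seq nat := [:: 4; 5; 6; 4; 7; 5; 4; 6; 7].
Definition W15 : seq nat := [:: 4; 5; 6; 4; 5; 7; 4; 5; 6; 4; 7; 5; 4; 6; 7].

Definition Wd (n : nat) : seq nat :=
  if n == 3 then [:: 4; 5; 6]
  else if n == 5 then [:: 4; 5; 6; 7; 8]
  else if n == 7 then [:: 4; 5; 6; 4; 5; 7; 8]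
  else if n == 11 then [:: 4; 5; 6; 4; 5; 7; 4; 5; 6; 7; 8]
  else match n %% 4 with 0 => [::] | 1 => W9 | 2 => W6 | _ => W15 end.

Definition colW (W : seq nat) (n i : nat) : nat :=
  if i < n - size W then nth 0 P4 (i %% 4) else nth 0 W (i - (n - size W)).

Definition col n i := colW (Wd n) n i.

Definition Valid (c : nat -> nat) (n : nat) : Prop :=
  forall i d, i < n -> 0 < d -> d <= (c i)./2 -> (i + d) %% n != i ->
    c ((i + d) %% n) != c i.

Definition validb (c : nat -> nat) (n K : nat) : bool :=
  all (fun i => (4 <= c i <= K) &&
     all (fun d => (d <= (c i)./2) ==> ((i + d) %% n != i) ==> (c ((i + d) %% n) != c i))
       (iota 1 4)) (iota 0 n).

Lemma validbP c n K : K <= 9 -> validb c n K ->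
  Valid c n /\ (forall i, i < n -> 4 <= c i <= K).
Proof.
move=> HK9 /allP H; split; last first.
  move=> i Hi; have Hin : i \in iota 0 n by rewrite mem_iota.
  by case/andP: (H i Hin).
move=> i d Hi Hd0 Hd Hne.
have Hin : i \in iota 0 n by rewrite mem_iota.
case/andP: (H i Hin) => /andP [_ HK] /allP H2.
have Hd' : d \in iota 1 4 by rewrite mem_iota; lia.
by move: (H2 d Hd'); rewrite Hd Hne.
Qed.

Definition checkW (W : seq nat) : bool :=
  let C := P4 ++ W in let L := size C in
  all (fun t => all (fun d => (d <= (nth 0 C t)./2) ==>
     (nth 0 C t != (if t + d < L then nth 0 C (t + d) else nth 0 P4 (t + d - L))))
   (iota 1 4)) (iota 0 L).

Lemma checks : [&& checkW [::], checkW W6, checkW W9 & checkW W15].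
Proof. by []. Qed.

Lemma smalln : all (fun n => validb (col n) n (theorem2_bound n)) (iota 3 17).
Proof. by []. Qed.

Lemma modtest q t : t < 4 -> (4 * q + t) %% 4 = t.
Proof. lia. Qed.


Lemma P4_range k : k < 4 -> 4 <= nth 0 P4 k <= 7.
Proof. by case: k => [|[|[|[|]]]]. Qed.

Lemma P4_inj k l : k < 4 -> l < 4 -> nth 0 P4 k = nth 0 P4 l -> k = l.
Proof. by case: k => [|[|[|[|]]]] //; case: l => [|[|[|[|]]]]. Qed.

Lemma genW W n : checkW W -> all (fun c => 4 <= c <= 7) W -> 4 + size W <= n ->
  4 %| (n - size W) ->
  Valid (colW W n) n /\ (forall i, i < n -> 4 <= colW W n i <= 7).
Proof.
move=> /allP HC /allP HW Hn Hdiv.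
set q := (n - size W) %/ 4 - 1.
have Hb : n - size W = 4 * q + 4.
  move: Hdiv; rewrite /q; move/dvdnP => [k Hk]; rewrite Hk mulnK //; lia.
clearbody q.
have colP i : i < 4 * q + 4 -> colW W n i = nth 0 P4 (i %% 4).
  by move=> Hi; rewrite /colW Hb Hi.
have colC u : u < 4 + size W -> colW W n (4 * q + u) = nth 0 (P4 ++ W) u.
  move=> Hu; case: (ltnP u 4) => Hu4.
    rewrite colP; last lia.
    rewrite nth_cat /= Hu4; congr nth; lia.
  rewrite /colW Hb ifN; last lia.
  rewrite nth_cat /= ltnNge Hu4 /=; congr nth; lia.
split; last first.
  move=> i Hi; case: (ltnP i (4 * q + 4)) => Hi4.
    by rewrite colP // P4_range // ltn_mod.
  rewrite /colW Hb ifN; last lia.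
  apply: HW; apply: mem_nth.
  have HS : i - (4 * q + 4) < size W by lia.
  exact HS.
move=> i d Hi Hd0 Hd Hne.
case: (ltnP i (4 * q)) => Hiq.
  have Hd3 : d <= 3.
    move: Hd; rewrite colP; last lia.
    have := P4_range (ltn_mod i 4); lia.
  have -> : (i + d) %% n = i + d by rewrite modn_small //; lia.
  rewrite colP; last lia. rewrite colP; last lia.
  apply/eqP => /P4_inj; rewrite !ltn_mod => /(_ isT isT); lia.
set t := i - 4 * q.
have Ei : i = 4 * q + t by lia.
have Ht : t < 4 + size W by lia.
move: Hd; rewrite Ei colC // => Hd.
have Ht' : t \in iota 0 (size (P4 ++ W)) by rewrite mem_iota size_cat /=; lia.
have Hd4 : d <= 4.
  have : nth 0 (P4 ++ W) t <= 7.
    rewrite nth_cat /=; case: ifP => Ht4; first by have := P4_range Ht4; lia.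
    have HS : t - 4 < size W by lia.
    by have /andP [_ ->] := HW (nth 0 W (t - 4)) (mem_nth 0 HS).
  lia.
have H1 := HC t Ht'.
have H2 : d \in iota 1 4 by rewrite mem_iota; lia.
have := (elimT allP H1) d H2.
rewrite Hd /=.
case: ifP => Htd.
  have -> : (4 * q + t + d) %% n = 4 * q + (t + d) by rewrite modn_small; lia.
  by rewrite colC // eq_sym.
have -> : (4 * q + t + d) %% n = t + d - (4 + size W).
  have -> : 4 * q + t + d = 1 * n + (t + d - (4 + size W)) by lia.
  rewrite modnMDl modn_small //; lia.
rewrite colP; last lia.
rewrite modn_small; last lia.
by rewrite eq_sym.
Qed.


Lemma cycle_ok n : 3 <= n ->
  Valid (col n) n /\ (forall i, i < n -> 4 <= col n i <= theorem2_bound n).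
Proof.
move=> Hn; case: (ltnP n 20) => Hn20.
  apply: (@validbP _ _ (theorem2_bound n)).
    by rewrite /theorem2_bound; case: ifP => _ //; case: ifP.
  have Hin : n \in iota 3 17 by rewrite mem_iota; lia.
  exact: (allP smalln n Hin).
have Hb : theorem2_bound n = 7.
  rewrite /theorem2_bound ifN; last by apply/eqP; lia.
  rewrite !inE; case: ifP => //.
  by move=> /orP [/eqP|/orP [/eqP|/eqP]]; lia.
rewrite Hb /col.
have HWd : Wd n = match n %% 4 with 0 => [::] | 1 => W9 | 2 => W6 | _ => W15 end.
  rewrite /Wd !ifN //; apply/eqP; lia.
rewrite HWd.
have Hm : n %% 4 < 4 by rewrite ltn_mod.
case E: (n %% 4) => [|[|[|[|k]]]]; rewrite E in Hm => //.
- apply: genW => //; first by rewrite /=; lia.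
  by apply/dvdnP; exists (n %/ 4); rewrite /=; lia.
- apply: genW => //; first by rewrite /=; lia.
  by apply/dvdnP; exists ((n - 9) %/ 4); rewrite /=; lia.
- apply: genW => //; first by rewrite /=; lia.
  by apply/dvdnP; exists ((n - 6) %/ 4); rewrite /=; lia.
- apply: genW => //; first by rewrite /=; lia.
  by apply/dvdnP; exists ((n - 15) %/ 4); rewrite /=; lia.
Qed.

Lemma valid_contra c n (V : Valid c n) i i' d : i < n -> i' < n -> i != i' ->
  c i = c i' -> d <= (c i)./2 ->
  (i' = i + d %[mod n]) \/ (i' + d = i %[mod n]) -> False.
Proof.
move=> Hi Hi' Hne Hc Hd [] H.
  rewrite modn_small // in H.
  case: d Hd H => [|d] Hd H.
    by rewrite addn0 modn_small // in H; rewrite H eqxx in Hne.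
  have Hne' : i' != i by rewrite eq_sym.
  by have := V i d.+1 Hi isT Hd; rewrite -H Hne' Hc eqxx => /(_ isT).
rewrite [in RHS]modn_small // in H.
case: d Hd H => [|d] Hd H.
  by rewrite addn0 modn_small // in H; rewrite H eqxx in Hne.
rewrite Hc in Hd.
by have := V i' d.+1 Hi' isT Hd; rewrite H Hne Hc eqxx => /(_ isT).
Qed.


Section Main.
Variables n m p : nat.
Local Notation G0 := (ncorona (cycle_graph n) (path_graph p)).
Local Notation GF := (FSSD m G0).

Definition colorF (v : gV GF) : nat :=
  match v with
  | inr _ => 1
  | inl (inl i) => col n (val i)
  | inl (inr (_, x)) => 2 + (val x) %% 2
  end.

Hypothesis Hn : 3 <= n.

Lemma colorF_range v : 1 <= colorF v <= theorem2_bound n.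
Proof.
have [_ Hr] := cycle_ok Hn.
have Hb : 6 <= theorem2_bound n.
  by rewrite /theorem2_bound; case: ifP => _ //; case: ifP.
case: v => [[i|[i x]]|s] /=.
- have := Hr i (ltn_ord i); lia.
- have : x %% 2 < 2 by rewrite ltn_mod.
  lia.
- lia.
Qed.

Lemma key x y : x != y -> colorF x = colorF y -> y \notin ball (colorF x) x.
Proof.
have [HV Hr] := cycle_ok Hn.
case: x => [a|s]; case: y => [b|t] Hxy Hc.
- apply/negP => /(lemA (@G0_sym n p)) Hb.
  case: a Hxy Hc Hb => [i|[i x]]; case: b => [i'|[i' x']] /= Hxy Hc Hb.
  + have [d Hd Hcong] := lemB Hb.
    apply: (@valid_contra _ _ HV i i' d) => //.
  + have := Hr i (ltn_ord i); have : x' %% 2 < 2 by rewrite ltn_mod.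
    lia.
  + have := Hr i' (ltn_ord i'); have : x %% 2 < 2 by rewrite ltn_mod.
    lia.
  + have Ec : (0 + x %% 2)./2 = 0.
      have : x %% 2 < 2 by rewrite ltn_mod.
      by case: (x %% 2) => [|[|]].
    rewrite Ec /= !inE in Hb.
    case/orP: Hb => [/eqP E|/existsP [w /andP [Hw Hwb]]].
      by rewrite E eqxx in Hxy.
    rewrite inE in Hw; move/eqP: Hw => Hw; subst w.
    move: Hwb; rewrite /ncorona_adj /= => /andP [_ /orP [/eqP E|/eqP E]];
      move: Hc; rewrite -E; lia.
- move: Hc => /=; case: a Hxy => [i|[i x]] /= _.
    have := Hr i (ltn_ord i); lia.
  lia.
- move: Hc => /=; case: b Hxy => [i|[i x]] /= _.
    have := Hr i (ltn_ord i); lia.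
  lia.
- rewrite /= !inE; apply/negP; case/orP => [/eqP E|/existsP [w /andP [Hw Ha]]].
    by rewrite E eqxx in Hxy.
  by rewrite inE in Hw; move/eqP: Hw => Hw; subst w.
Qed.

Lemma colorable : packing_colorable GF (theorem2_bound n).
Proof.
have Hb : theorem2_bound n = (theorem2_bound n).-1.+1.
  by rewrite /theorem2_bound; case: ifP => _ //; case: ifP.
move: (colorF_range); rewrite Hb => Hr.
apply/existsP; exists [ffun v => inord (colorF v).-1].
apply/forallP => j; apply/forallP => x; apply/implyP; rewrite inE ffunE => /eqP Hx.
apply/forallP => y; apply/implyP; rewrite inE ffunE => /eqP Hy.
apply/implyP => Hxy.
have Ej : forall v, inord (colorF v).-1 = j -> j.+1 = colorF v.
  move=> v <-; have := Hr v => Hv.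
  rewrite inordK; lia.
rewrite /dist_gt (Ej x Hx).
apply: key => //.
by rewrite -(Ej x Hx) -(Ej y Hy).
Qed.
End Main.

Theorem theorem2 (n m p : nat) :
  3 <= n -> 1 <= m -> 2 <= p ->
  chi_rho (FSSD m (ncorona (cycle_graph n) (path_graph p))) <= theorem2_bound n.
Proof.
move=> Hn _ _; rewrite /chi_rho; case: ex_minnP => k _ Hmin.
apply: Hmin; exact: colorable.
Qed.
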